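(* Let $f\in C^\infty(\mathbb{R})$ with $f'(0)=0$, let $u_0\in C^\infty(\mathbb{R})$ be bounded with bounded derivatives, and let $u\in C^\infty((0,\infty)\times\mathbb{R},\mathbb{R})$ be the smooth solution of $u_t=u_{xx}+f'(u)u_x$, $u(0,\cdot)=u_0$. Assume there exists $(t_0,\xi_0)\in(0,\infty)\times\mathbb{R}$ such that $$u(t_0,\xi_0)=0,\quad u_x(t_0,\xi_0)=0,\quad u_{xx}(t_0,\xi_0)\neq0.$$ Then for $t<t_0$ near $t_0$ there exist two roots $\xi_{1,2}(t)$ of $u(t,\cdot)$ near $\xi_0$ such that $$\xi_{1,2}(t)-\xi_0=\pm\sqrt{2(t_0-t)}+\mathcal{O}(t_0-t),\qquad u_x(t,\xi_{1,2}(t))=\pm\sqrt{2(t_0-t)}\,u_{xx}(t_0,\xi_0)+\mathcal{O}(t_0-t)$$ as $t\to t_0^-$, and for $t>t_0$ near $t_0$ no roots of $u(t,\cdot)$ near $\xi_0$ exist. *)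

(* Defs.v *)
From Stdlib Require Import Reals List.
From Coquelicot Require Import Coquelicot.
Open Scope R_scope.

Definition smooth1 (f : R -> R) : Prop :=
  forall (n : nat) (x : R), ex_derive_n f n x.

Definition pt (u : R -> R -> R) : R -> R -> R :=
  fun t x => Derive (fun s => u s x) t.
Definition px (u : R -> R -> R) : R -> R -> R :=
  fun t x => Derive (fun y => u t y) x.

(* Iterated partial derivative along a list of directions
   (true = d/dt, false = d/dx), innermost derivative last in the list. *)
Fixpoint pd (l : list bool) (u : R -> R -> R) : R -> R -> R :=
  match l with
  | nil => u
  | b :: l' => if b then pt (pd l' u) else px (pd l' u)
  end.

Definition smooth2_on (D : R -> R -> Prop) (u : R -> R -> R) : Prop :=
  forall (l : list bool) (t x : R), D t x ->
    ex_derive (fun s => pd l u s x) t /\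
    ex_derive (fun y => pd l u t y) x /\
    continuous (fun z : R * R => pd l u (fst z) (snd z)) (t, x).

(* Main.v *)
Require Import Defs.
From Stdlib Require Import Reals Lra Psatz.
From Stdlib Require Import IndefiniteDescription Classical.
From Coquelicot Require Import Coquelicot.
Open Scope R_scope.

Lemma ballR (x y e : R) : ball x e y <-> Rabs (y - x) < e.
Proof. reflexivity. Qed.

Lemma local_bound (g : R * R -> R) (t0 x0 : R) :
  continuous g (t0, x0) ->
  exists d, 0 < d /\ forall t x, Rabs (t - t0) < d -> Rabs (x - x0) < d ->
    Rabs (g (t, x)) <= Rabs (g (t0, x0)) + 1.
Proof.
  intros Hc. apply filterlim_locally with (eps := mkposreal 1 Rlt_0_1) in Hc.
  destruct Hc as [d Hd]. exists d. split; [apply cond_pos|].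
  intros t x Ht Hx.
  assert (H := Hd (t, x) (conj Ht Hx)). change (Rabs (g (t, x) - g (t0, x0)) < 1) in H.
  assert (H2 := Rabs_triang_inv (g (t,x)) (g (t0,x0))). lra.
Qed.

Lemma bound_der (g dg : R -> R) (x0 x B : R) :
  (forall z, Rmin x0 x <= z <= Rmax x0 x -> is_derive g z (dg z) /\ Rabs (dg z) <= B) ->
  Rabs (g x - g x0) <= B * Rabs (x - x0).
Proof.
  intros H.
  destruct (MVT_gen g x0 x dg) as [c [Hc Heq]].
  - intros z Hz. apply H. lra.
  - intros z Hz. apply continuity_pt_filterlim.
    apply (ex_derive_continuous g z). exists (dg z). apply H. lra.
  - rewrite Heq, Rabs_mult. apply Rmult_le_compat_r; [apply Rabs_pos|].
    apply H. exact Hc.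
Qed.

Lemma between_abs (a b z : R) : Rmin a b <= z <= Rmax a b -> Rabs (z - a) <= Rabs (b - a).
Proof.
  unfold Rmin, Rmax. intros H. destruct (Rle_dec a b);
  unfold Rabs; repeat destruct Rcase_abs; lra.
Qed.

Lemma is_derive_sub_lin (g : R -> R) dg z a c :
  is_derive g z dg -> is_derive (fun y => g y - a * (y - c)) z (dg - a).
Proof.
  intros H. apply (is_derive_minus g _ z dg a H).
  auto_derive. auto. ring.
Qed.

Lemma is_derive_sub_quad (g : R -> R) dg z a c :
  is_derive g z dg -> is_derive (fun y => g y - a / 2 * (y - c) ^ 2) z (dg - a * (z - c)).
Proof.
  intros H. apply (is_derive_minus g _ z dg (a * (z - c)) H).
  auto_derive. auto. simpl; field.
Qed.

Lemma dx_of (u : R -> R -> R) l t x :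
  smooth2_on (fun t _ => 0 < t) u -> 0 < t ->
  is_derive (fun y => pd l u t y) x (pd (false :: l) u t x).
Proof. intros Hu Ht. apply Derive_correct. exact (proj1 (proj2 (Hu l t x Ht))). Qed.

Lemma dt_of (u : R -> R -> R) l t x :
  smooth2_on (fun t _ => 0 < t) u -> 0 < t ->
  is_derive (fun s => pd l u s x) t (pd (true :: l) u t x).
Proof. intros Hu Ht. apply Derive_correct. exact (proj1 (Hu l t x Ht)). Qed.

Lemma estimates (u : R -> R -> R) (t0 xi0 d0 M a : R)
  (Hu : smooth2_on (fun t _ => 0 < t) u)
  (Hbox : forall t x, Rabs (t - t0) < d0 -> Rabs (x - xi0) < d0 ->
     0 < t /\ Rabs (pd (false :: false :: false :: nil) u t x) <= M /\
     Rabs (pd (true :: false :: nil) u t x) <= M /\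
     Rabs (pd (true :: true :: nil) u t x) <= M /\
     Rabs (pd (false :: true :: nil) u t x) <= M)
  (Hz : u t0 xi0 = 0) (Hzx : px u t0 xi0 = 0)
  (Ha : px (px u) t0 xi0 = a) (Hut : pt u t0 xi0 = a) :
  forall t x, Rabs (t - t0) < d0 -> Rabs (x - xi0) < d0 ->
    Rabs (u t x - a / 2 * (x - xi0) ^ 2 - a * (t - t0)) <=
      M * Rabs (x - xi0) ^ 2 * Rabs (x - xi0) + (M * Rabs (t - t0) + M * Rabs (x - xi0)) * Rabs (t - t0) /\
    Rabs (px u t x - a * (x - xi0)) <= M * Rabs (t - t0) + M * Rabs (x - xi0) ^ 2.
Proof.
  intros t x Ht Hx.
  assert (Hd0 : 0 < d0) by (pose proof (Rabs_pos (t - t0)); lra).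
  assert (Hc0 : Rabs (t0 - t0) < d0) by (rewrite Rminus_diag, Rabs_R0; lra).
  assert (Hc1 : Rabs (xi0 - xi0) < d0) by (rewrite Rminus_diag, Rabs_R0; lra).
  assert (HM : 0 <= M).
  { destruct (Hbox t0 xi0 Hc0 Hc1) as [_ [H _]].
    pose proof (Rabs_pos (pd (false :: false :: false :: nil) u t0 xi0)). lra. }
  assert (Ht0 : 0 < t0) by exact (proj1 (Hbox t0 xi0 Hc0 Hc1)).
  assert (Bp : forall t x, Rabs (t - t0) < d0 -> Rabs (x - xi0) < d0 -> 0 < t)
    by (intros t1 x1 H1 H2; destruct (Hbox _ _ H1 H2) as (?&?&?&?&?); assumption).
  assert (B1 : forall t x, Rabs (t - t0) < d0 -> Rabs (x - xi0) < d0 ->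
     Rabs (pd (false :: false :: false :: nil) u t x) <= M)
    by (intros t1 x1 H1 H2; destruct (Hbox _ _ H1 H2) as (?&?&?&?&?); assumption).
  assert (B2 : forall t x, Rabs (t - t0) < d0 -> Rabs (x - xi0) < d0 ->
     Rabs (pd (true :: false :: nil) u t x) <= M)
    by (intros t1 x1 H1 H2; destruct (Hbox _ _ H1 H2) as (?&?&?&?&?); assumption).
  assert (B3 : forall t x, Rabs (t - t0) < d0 -> Rabs (x - xi0) < d0 ->
     Rabs (pd (true :: true :: nil) u t x) <= M)
    by (intros t1 x1 H1 H2; destruct (Hbox _ _ H1 H2) as (?&?&?&?&?); assumption).
  assert (B4 : forall t x, Rabs (t - t0) < d0 -> Rabs (x - xi0) < d0 ->
     Rabs (pd (false :: true :: nil) u t x) <= M)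
    by (intros t1 x1 H1 H2; destruct (Hbox _ _ H1 H2) as (?&?&?&?&?); assumption).
  clear Hbox.
  assert (S1 : forall z, Rabs (z - xi0) < d0 ->
            Rabs (px (px u) t0 z - a) <= M * Rabs (z - xi0)).
  { intros z Hz'. rewrite <- Ha.
    apply (bound_der (fun y => pd (false :: false :: nil) u t0 y)
                     (fun y => pd (false :: false :: false :: nil) u t0 y)).
    intros w Hw. pose proof (between_abs _ _ _ Hw).
    split. apply dx_of; auto.
    apply B1; lra. }
  assert (S2 : forall z, Rabs (z - xi0) < d0 ->
            Rabs (px u t0 z - a * (z - xi0)) <= M * Rabs (z - xi0) ^ 2).
  { intros z Hz'.
    assert (HB : Rabs ((fun y => pd (false :: nil) u t0 y - a * (y - xi0)) z -
      (fun y => pd (false :: nil) u t0 y - a * (y - xi0)) xi0) <= (M * Rabs (z - xi0)) * Rabs (z - xi0)).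
    { apply (bound_der (fun y => pd (false :: nil) u t0 y - a * (y - xi0)) (fun y => px (px u) t0 y - a) xi0 z).
      intros w Hw. pose proof (between_abs _ _ _ Hw).
      split. apply is_derive_sub_lin. apply (dx_of u (false :: nil)); auto.
      apply Rle_trans with (M * Rabs (w - xi0)). apply S1. lra.
      apply Rmult_le_compat_l; lra. }
    simpl in HB. rewrite Hzx in HB.
    replace (px u t0 z - a * (z - xi0)) with (px u t0 z - a * (z - xi0) - (0 - a * (xi0 - xi0))) by ring.
    replace (M * Rabs (z - xi0) ^ 2) with (M * Rabs (z - xi0) * Rabs (z - xi0)) by ring.
    exact HB. }
  assert (S3 : forall z, Rabs (z - xi0) < d0 ->
            Rabs (u t0 z - a / 2 * (z - xi0) ^ 2) <= M * Rabs (z - xi0) ^ 2 * Rabs (z - xi0)).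
  { intros z Hz'.
    assert (HB : Rabs ((fun y => pd nil u t0 y - a / 2 * (y - xi0) ^ 2) z -
      (fun y => pd nil u t0 y - a / 2 * (y - xi0) ^ 2) xi0) <= (M * Rabs (z - xi0) ^ 2) * Rabs (z - xi0)).
    { apply (bound_der (fun y => pd nil u t0 y - a / 2 * (y - xi0) ^ 2) (fun y => px u t0 y - a * (y - xi0)) xi0 z).
      intros w Hw. pose proof (between_abs _ _ _ Hw).
      split. apply is_derive_sub_quad. apply (dx_of u nil); auto.
      apply Rle_trans with (M * Rabs (w - xi0) ^ 2). apply S2. lra.
      apply Rmult_le_compat_l; [lra|]. apply pow_incr. split; [apply Rabs_pos| lra]. }
    simpl in HB. rewrite Hz in HB.
    replace (u t0 z - a / 2 * (z - xi0) ^ 2) with (u t0 z - a / 2 * (z - xi0) ^ 2 - (0 - a / 2 * (xi0 - xi0) ^ 2)) by ring.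
    exact HB. }
  assert (T1 : forall tau, Rabs (tau - t0) <= Rabs (t - t0) ->
      Rabs (pt u tau x - pt u t0 x) <= M * Rabs (tau - t0)).
  { intros tau Htau.
    apply (bound_der (fun s => pd (true :: nil) u s x) (fun s => pd (true :: true :: nil) u s x) t0 tau).
    intros w Hw. pose proof (between_abs _ _ _ Hw).
    split. apply (dt_of u (true :: nil)); auto. apply (Bp w x); lra.
    apply B3; lra. }
  assert (T2 : Rabs (pt u t0 x - a) <= M * Rabs (x - xi0)).
  { rewrite <- Hut.
    apply (bound_der (fun y => pd (true :: nil) u t0 y) (fun y => pd (false :: true :: nil) u t0 y) xi0 x).
    intros w Hw. pose proof (between_abs _ _ _ Hw).
    split. apply (dx_of u (true :: nil)); auto.
    apply B4; lra. }
  assert (T3 : Rabs ((fun s => pd nil u s x - a * (s - t0)) t - (fun s => pd nil u s x - a * (s - t0)) t0)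
       <= (M * Rabs (t - t0) + M * Rabs (x - xi0)) * Rabs (t - t0)).
  { apply (bound_der (fun s => pd nil u s x - a * (s - t0)) (fun s => pt u s x - a) t0 t).
    intros w Hw. pose proof (between_abs _ _ _ Hw).
    split. apply is_derive_sub_lin. apply (dt_of u nil); auto. apply (Bp w x); lra.
    replace (pt u w x - a) with ((pt u w x - pt u t0 x) + (pt u t0 x - a)) by ring.
    eapply Rle_trans. apply Rabs_triang.
    pose proof (T1 w H). pose proof (Rmult_le_compat_l M _ _ HM H). lra. }
  simpl in T3.
  assert (E2a : Rabs (px u t x - px u t0 x) <= M * Rabs (t - t0)).
  { apply (bound_der (fun s => pd (false :: nil) u s x) (fun s => pd (true :: false :: nil) u s x) t0 t).
    intros w Hw. pose proof (between_abs _ _ _ Hw).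
    split. apply (dt_of u (false :: nil)); auto. apply (Bp w x); lra.
    apply B2; lra. }
  split.
  - pose proof (S3 x Hx).
    replace (u t x - a / 2 * (x - xi0) ^ 2 - a * (t - t0)) with
      ((u t x - a * (t - t0) - (u t0 x - a * (t0 - t0))) + (u t0 x - a / 2 * (x - xi0) ^ 2)) by ring.
    eapply Rle_trans. apply Rabs_triang. lra.
  - pose proof (S2 x Hx).
    replace (px u t x - a * (x - xi0)) with ((px u t x - px u t0 x) + (px u t0 x - a * (x - xi0))) by ring.
    eapply Rle_trans. apply Rabs_triang. lra.
Qed.
Lemma core (a M v z k U : R) : 0 < M -> 0 < v -> v <= 2 -> (z = v \/ z = -v) ->
  k = 20 * M / Rabs a * v ^ 2 -> k <= v -> a <> 0 ->
  Rabs (U - a / 2 * ((z + k) ^ 2 - z ^ 2)) <= 8 * M * v ^ 3 + (M * (v ^ 2 / 2) + 2 * M * v) * (v ^ 2 / 2) ->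
  0 < U * (a * z).
Proof.
  intros HM Hv Hv2 Hz Hk Hkv Ha HU.
  assert (Hk0 : 0 <= k) by (rewrite Hk; apply Rmult_le_pos; [apply Rmult_le_pos; [lra|]; left; apply Rinv_0_lt_compat; apply Rabs_pos_lt; auto | apply pow2_ge_0]).
  assert (Hak : a * k = 20 * M * v ^ 2 \/ a * k = - (20 * M * v ^ 2)).
  { rewrite Hk. unfold Rabs; destruct Rcase_abs; [right|left]; field; lra. }
  assert (HE : 8 * M * v ^ 3 + (M * (v ^ 2 / 2) + 2 * M * v) * (v ^ 2 / 2) <= 19/2 * M * v ^ 3).
  { assert (M * v ^ 4 <= 2 * M * v ^ 3) by (replace (M * v ^ 4) with ((M * v ^ 3) * v) by ring;
      replace (2 * M * v ^ 3) with ((M * v ^ 3) * 2) by ring; apply Rmult_le_compat_l; [apply Rmult_le_pos; [lra| apply pow_le; lra]|lra]).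
    nra. }
  assert (HQ : a / 2 * ((z + k) ^ 2 - z ^ 2) = a * k * (2 * z + k) / 2) by (field).
  rewrite HQ in HU.
  assert (HU' : - (8 * M * v ^ 3 + (M * (v ^ 2 / 2) + 2 * M * v) * (v ^ 2 / 2)) <= U - a * k * (2 * z + k) / 2 <= 8 * M * v ^ 3 + (M * (v ^ 2 / 2) + 2 * M * v) * (v ^ 2 / 2))
    by (revert HU; unfold Rabs; destruct Rcase_abs; intros; lra).
  clear HU.
  assert (Hv3 : 0 < M * v ^ 3) by (apply Rmult_lt_0_compat; [lra | apply pow_lt; lra]).
  assert (Hv4 : 0 < M * v ^ 2) by (apply Rmult_lt_0_compat; [lra | apply pow_lt; lra]).
  assert (Hkk : 0 <= M * v ^ 2 * k) by (apply Rmult_le_pos; lra).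
  assert (Hvk : M * v ^ 2 * k <= M * v ^ 3) by (replace (M * v ^ 3) with (M * v ^ 2 * v) by ring; apply Rmult_le_compat_l; lra).
  destruct Hz as [Hz|Hz]; subst z; destruct Hak as [Hak|Hak]; rewrite Hak in HU'.
  - assert (Hap : 0 < a).
    { destruct (Rlt_or_le 0 a) as [|Hn]; auto. assert (a * k <= 0) by nra. lra. }
    assert (0 < U) by nra. apply Rmult_lt_0_compat; [lra|]. apply Rmult_lt_0_compat; lra.
  - assert (Hap : a < 0).
    { destruct (Rlt_or_le a 0) as [|Hn]; auto. assert (0 <= a * k) by (apply Rmult_le_pos; lra). lra. }
    assert (U < 0) by nra. replace (U * (a * v)) with ((- U) * (- a) * v) by ring.
    apply Rmult_lt_0_compat; [|lra]. apply Rmult_lt_0_compat; lra.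
  - assert (Hap : 0 < a).
    { destruct (Rlt_or_le 0 a) as [|Hn]; auto. assert (a * k <= 0) by nra. lra. }
    assert (U < 0) by nra. replace (U * (a * - v)) with ((- U) * a * v) by ring.
    apply Rmult_lt_0_compat; [|lra]. apply Rmult_lt_0_compat; lra.
  - assert (Hap : a < 0).
    { destruct (Rlt_or_le a 0) as [|Hn]; auto. assert (0 <= a * k) by (apply Rmult_le_pos; lra). lra. }
    assert (0 < U) by nra. replace (U * (a * - v)) with (U * (- a) * v) by ring.
    apply Rmult_lt_0_compat; [|lra]. apply Rmult_lt_0_compat; lra.
Qed.

Lemma abs_between (x b : R) : Rabs x <= b -> - b <= x <= b.
Proof. unfold Rabs; destruct Rcase_abs; intros; lra. Qed.

Lemma root_exists (u : R -> R -> R) (t0 xi0 d0 M a t w : R)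
  (Hu : smooth2_on (fun t _ => 0 < t) u)
  (Est : forall t x, Rabs (t - t0) < d0 -> Rabs (x - xi0) < d0 ->
    Rabs (u t x - a / 2 * (x - xi0) ^ 2 - a * (t - t0)) <=
      M * Rabs (x - xi0) ^ 2 * Rabs (x - xi0) + (M * Rabs (t - t0) + M * Rabs (x - xi0)) * Rabs (t - t0) /\
    Rabs (px u t x - a * (x - xi0)) <= M * Rabs (t - t0) + M * Rabs (x - xi0) ^ 2)
  (HM : 0 < M) (Ha : a <> 0) (Ht : 0 < t) (Hs : 0 < t0 - t < d0)
  (Hw : w ^ 2 = 2 * (t0 - t)) (Hv2 : Rabs w <= 2)
  (Hkv : 20 * M / Rabs a * Rabs w ^ 2 <= Rabs w) (H2v : 2 * Rabs w < d0) :
  exists x, u t x = 0 /\ Rabs (x - xi0 - w) <= 40 * M / Rabs a * (t0 - t) /\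
    Rabs (x - xi0) <= 2 * Rabs w /\ Rabs (px u t x - a * w) <= 49 * M * (t0 - t).
Proof.
  set (v := Rabs w). set (sg := t0 - t).
  set (k := 20 * M / Rabs a * v ^ 2).
  assert (Hkv' : k <= v) by exact Hkv.
  assert (Hv2' : v <= 2) by exact Hv2.
  assert (H2v' : 2 * v < d0) by exact H2v.
  clear Hkv Hv2 H2v.
  assert (Hvw : v ^ 2 = w ^ 2) by (unfold v; apply pow2_abs).
  assert (HA : 0 < Rabs a) by (apply Rabs_pos_lt; auto).
  assert (Hv : 0 < v).
  { assert (0 <= v) by apply Rabs_pos. destruct (Req_dec v 0) as [E|]; [|lra].
    rewrite E in Hvw. simpl in Hvw. nra. }
  assert (Hk0 : 0 <= k).
  { unfold k. apply Rmult_le_pos; [|apply pow2_ge_0]. unfold Rdiv. apply Rmult_le_pos; [lra|].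
    left; apply Rinv_0_lt_compat; lra. }
  assert (Hk : k = 40 * M / Rabs a * (t0 - t)) by (unfold k; rewrite Hvw, Hw; field; lra).
  assert (Hak : Rabs a * k = 40 * M * sg) by (rewrite Hk; unfold sg; field; lra).
  assert (Hwv : w = v \/ w = - v) by (unfold v, Rabs; destruct Rcase_abs; [right|left]; lra).
  assert (Hsg : sg = v ^ 2 / 2) by (rewrite Hvw, Hw; unfold sg; field).
  assert (EP : forall e z, (e = 1 \/ e = -1) -> z = e * w ->
     0 < u t (xi0 + w + e * k) * (a * z)).
  { intros e z He Hz.
    assert (Hy : Rabs (w + e * k) <= 2 * v).
    { eapply Rle_trans. apply Rabs_triang. rewrite Rabs_mult.
      destruct He as [He|He]; rewrite He; [rewrite Rabs_R1|replace (Rabs (-1)) with 1 by (unfold Rabs; destruct Rcase_abs; lra)];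
      rewrite (Rabs_pos_eq k) by lra; fold v; lra. }
    assert (Hts : Rabs (t - t0) = sg) by (unfold sg; rewrite Rabs_minus_sym; apply Rabs_pos_eq; lra).
    destruct (Est t (xi0 + w + e * k)) as [E1 _].
    { rewrite Hts. lra. }
    { replace (xi0 + w + e * k - xi0) with (w + e * k) by ring. lra. }
    replace (xi0 + w + e * k - xi0) with (w + e * k) in E1 by ring.
    rewrite Hts in E1.
    apply (core a M v z k).
    - lra.
    - lra.
    - lra.
    - destruct He as [He|He]; rewrite Hz, He; destruct Hwv as [Hwv|Hwv]; rewrite Hwv; 
        [left|right|right|left]; ring.
    - reflexivity.
    - exact Hkv'.
    - exact Ha.
    - replace (a / 2 * ((z + k) ^ 2 - z ^ 2)) with (a / 2 * (w + e * k) ^ 2 + a * (t - t0)).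
      2:{ replace (t - t0) with (- sg) by (unfold sg; ring). rewrite Hsg, Hvw, Hz.
          destruct He as [He|He]; rewrite He; field. }
      replace (u t (xi0 + w + e * k) - (a / 2 * (w + e * k) ^ 2 + a * (t - t0))) with
        (u t (xi0 + w + e * k) - a / 2 * (w + e * k) ^ 2 - a * (t - t0)) by ring.
      eapply Rle_trans. exact E1.
      set (q := Rabs (w + e * k)) in *.
      assert (0 <= q) by apply Rabs_pos.
      assert (0 <= sg) by (unfold sg; lra).
      assert (q ^ 2 * q <= 8 * v ^ 3).
      { assert (q ^ 2 <= (2 * v) ^ 2) by (apply pow_incr; lra).
        replace (8 * v ^ 3) with ((2 * v) ^ 2 * (2 * v)) by ring.
        apply Rmult_le_compat; try lra. apply pow2_ge_0. }
      assert ((M * sg + M * q) * sg <= (M * (v ^ 2 / 2) + 2 * M * v) * (v ^ 2 / 2)).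
      { rewrite <- Hsg. apply Rmult_le_compat_r; [lra|]. nra. }
      nra. }
  assert (Hhi := EP 1 w (or_introl eq_refl) ltac:(ring)).
  assert (Hlo := EP (-1) (- w) (or_intror eq_refl) ltac:(ring)).
  set (Uhi := u t (xi0 + w + 1 * k)) in *.
  set (Ulo := u t (xi0 + w + -1 * k)) in *.
  assert (Hprod : Ulo * Uhi <= 0).
  { assert (0 < (Ulo * (a * - w)) * (Uhi * (a * w))) by (apply Rmult_lt_0_compat; auto).
    assert (0 <= (a * w) ^ 2) by apply pow2_ge_0. nra. }
  assert (Hcont : continuity (fun x => u t x)).
  { intros x. apply continuity_pt_filterlim.
    apply (ex_derive_continuous (fun y => pd nil u t y)).
    exact (proj1 (proj2 (Hu nil t x Ht))). }
  destruct (IVT_cor (fun x => u t x) (xi0 + w + -1 * k) (xi0 + w + 1 * k) Hcont ltac:(lra) Hprod)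
    as [xr [Hxr Hux]].
  exists xr. 
  assert (H1 : Rabs (xr - xi0 - w) <= k) by (apply Rabs_le; lra).
  assert (H2 : Rabs (xr - xi0) <= 2 * v).
  { replace (xr - xi0) with ((xr - xi0 - w) + w) by ring.
    eapply Rle_trans. apply Rabs_triang. fold v. lra. }
  split; [exact Hux|]. split; [eapply Rle_trans; [exact H1| rewrite Hk; right; reflexivity]|]. split; [exact H2|].
  assert (Hts2 : Rabs (t - t0) = sg) by (unfold sg; rewrite Rabs_minus_sym; apply Rabs_pos_eq; lra).
  destruct (Est t xr) as [_ E2].
  { rewrite Hts2. unfold sg. lra. }
  { lra. }
  rewrite Hts2 in E2.
  replace (px u t xr - a * w) with ((px u t xr - a * (xr - xi0)) + a * (xr - xi0 - w)) by ring.
  eapply Rle_trans. apply Rabs_triang. rewrite Rabs_mult.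
  assert (Rabs (xr - xi0) ^ 2 <= (2 * v) ^ 2) by (apply pow_incr; split; [apply Rabs_pos|lra]).
  assert (Rabs a * Rabs (xr - xi0 - w) <= Rabs a * k) by (apply Rmult_le_compat_l; lra).
  fold sg. rewrite Hak in *.
  assert (M * Rabs (xr - xi0) ^ 2 <= M * (2 * v) ^ 2) by (apply Rmult_le_compat_l; lra).
  replace ((2 * v) ^ 2) with (8 * sg) in * by (rewrite Hsg; field).
  lra.
Qed.

Lemma root_fun (P : R -> R -> Prop) (Q : R -> Prop) :
  (forall t, Q t -> exists x, P t x) -> exists f : R -> R, forall t, Q t -> P t (f t).
Proof.
  intros H.
  assert (H' : forall t, exists x, Q t -> P t x).
  { intros t. destruct (classic (Q t)) as [Hq|Hq].
    - destruct (H t Hq) as [x Hx]. exists x. auto.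
    - exists 0. intros; contradiction. }
  exists (fun t => proj1_sig (constructive_indefinite_description _ (H' t))).
  intros t Ht. exact (proj2_sig (constructive_indefinite_description _ (H' t)) Ht).
Qed.

Theorem proposition4p1
  (f u0 : R -> R) (u : R -> R -> R) (t0 xi0 : R)
  (Hf : smooth1 f)
  (Hf0 : Derive f 0 = 0)
  (Hu0 : smooth1 u0)
  (Hu0b : forall n : nat, exists M : R, forall x : R, Rabs (Derive_n u0 n x) <= M)
  (Hu : smooth2_on (fun t _ => 0 < t) u)
  (Hpde : forall t x, 0 < t ->
     pt u t x = px (px u) t x + Derive f (u t x) * px u t x)
  (Hinit : forall x, filterlim (fun z : R * R => u (fst z) (snd z))
             (within (fun z : R * R => 0 < fst z) (locally (0, x)))
             (locally (u0 x)))
  (Ht0 : 0 < t0)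
  (Hz : u t0 xi0 = 0)
  (Hzx : px u t0 xi0 = 0)
  (Hzxx : px (px u) t0 xi0 <> 0) :
  exists (delta eps C : R) (xi1 xi2 : R -> R),
    0 < delta /\ 0 < eps /\
    (forall t, t0 - delta < t < t0 ->
       u t (xi1 t) = 0 /\ u t (xi2 t) = 0 /\
       Rabs (xi1 t - xi0) < eps /\ Rabs (xi2 t - xi0) < eps /\
       Rabs (xi1 t - xi0 - sqrt (2 * (t0 - t))) <= C * (t0 - t) /\
       Rabs (xi2 t - xi0 + sqrt (2 * (t0 - t))) <= C * (t0 - t) /\
       Rabs (px u t (xi1 t) - sqrt (2 * (t0 - t)) * px (px u) t0 xi0)
         <= C * (t0 - t) /\
       Rabs (px u t (xi2 t) + sqrt (2 * (t0 - t)) * px (px u) t0 xi0)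
         <= C * (t0 - t)) /\
    (forall t x, t0 < t < t0 + delta -> Rabs (x - xi0) < eps -> u t x <> 0).
Proof.
  set (a := px (px u) t0 xi0) in *.
  assert (Hut : pt u t0 xi0 = a).
  { rewrite (Hpde t0 xi0 Ht0), Hzx. unfold a. ring. }
  destruct (local_bound (fun z => pd (false :: false :: false :: nil) u (fst z) (snd z)) t0 xi0
     (proj2 (proj2 (Hu _ t0 xi0 Ht0)))) as [d1 [Hd1 L1]].
  destruct (local_bound (fun z => pd (true :: false :: nil) u (fst z) (snd z)) t0 xi0
     (proj2 (proj2 (Hu _ t0 xi0 Ht0)))) as [d2 [Hd2 L2]].
  destruct (local_bound (fun z => pd (true :: true :: nil) u (fst z) (snd z)) t0 xi0
     (proj2 (proj2 (Hu _ t0 xi0 Ht0)))) as [d3 [Hd3 L3]].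
  destruct (local_bound (fun z => pd (false :: true :: nil) u (fst z) (snd z)) t0 xi0
     (proj2 (proj2 (Hu _ t0 xi0 Ht0)))) as [d4 [Hd4 L4]].
  simpl in L1, L2, L3, L4.
  set (R1 := Rabs (px (px (px u)) t0 xi0)) in *.
  set (R2 := Rabs (pt (px u) t0 xi0)) in *.
  set (R3 := Rabs (pt (pt u) t0 xi0)) in *.
  set (R4 := Rabs (px (pt u) t0 xi0)) in *.
  assert (0 <= R1 /\ 0 <= R2 /\ 0 <= R3 /\ 0 <= R4) as (?&?&?&?)
    by (unfold R1, R2, R3, R4; repeat split; apply Rabs_pos).
  set (M := 1 + (R1 + 1) + (R2 + 1) + (R3 + 1) + (R4 + 1)).
  assert (HM : 0 < M) by (unfold M; lra).
  set (d0 := Rmin (Rmin (Rmin d1 d2) (Rmin d3 d4)) (t0 / 2)).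
  assert (d0 <= d1 /\ d0 <= d2 /\ d0 <= d3 /\ d0 <= d4 /\ d0 <= t0 / 2 /\ 0 < d0) as (?&?&?&?&?&Hd0).
  { unfold d0. pose proof (Rmin_l d1 d2). pose proof (Rmin_r d1 d2).
    pose proof (Rmin_l d3 d4). pose proof (Rmin_r d3 d4).
    pose proof (Rmin_l (Rmin d1 d2) (Rmin d3 d4)). pose proof (Rmin_r (Rmin d1 d2) (Rmin d3 d4)).
    pose proof (Rmin_l (Rmin (Rmin d1 d2) (Rmin d3 d4)) (t0 / 2)).
    pose proof (Rmin_r (Rmin (Rmin d1 d2) (Rmin d3 d4)) (t0 / 2)).
    repeat split; try lra.
    repeat apply Rmin_pos; lra. }
  assert (Hbox : forall t x, Rabs (t - t0) < d0 -> Rabs (x - xi0) < d0 ->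
     0 < t /\ Rabs (pd (false :: false :: false :: nil) u t x) <= M /\
     Rabs (pd (true :: false :: nil) u t x) <= M /\
     Rabs (pd (true :: true :: nil) u t x) <= M /\
     Rabs (pd (false :: true :: nil) u t x) <= M).
  { intros t x Ht Hx.
    assert (Ht' := abs_between _ _ (Rlt_le _ _ Ht)).
    repeat split.
    - lra.
    - assert (H' := L1 t x ltac:(lra) ltac:(lra)). simpl. unfold M. lra.
    - assert (H' := L2 t x ltac:(lra) ltac:(lra)). simpl. unfold M. lra.
    - assert (H' := L3 t x ltac:(lra) ltac:(lra)). simpl. unfold M. lra.
    - assert (H' := L4 t x ltac:(lra) ltac:(lra)). simpl. unfold M. lra. }
  assert (Est := estimates u t0 xi0 d0 M a Hu Hbox Hz Hzx eq_refl Hut).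
  clearbody M d0. clear L1 L2 L3 L4 Hbox.
  set (A := Rabs a).
  assert (HA : 0 < A) by (apply Rabs_pos_lt; exact Hzxx).
  set (eps := Rmin d0 (A / (4 * M))).
  assert (Heps1 : eps <= d0) by apply Rmin_l.
  assert (Heps2 : eps <= A / (4 * M)) by apply Rmin_r.
  assert (Heps : 0 < eps) by (apply Rmin_pos; [lra| apply Rdiv_lt_0_compat; lra]).
  set (m := Rmin (Rmin 2 (A / (20 * M))) (eps / 2)).
  assert (Hm1 : m <= 2) by (unfold m; eapply Rle_trans; [apply Rmin_l| apply Rmin_l]).
  assert (Hm2 : m <= A / (20 * M)) by (unfold m; eapply Rle_trans; [apply Rmin_l| apply Rmin_r]).
  assert (Hm3 : m <= eps / 2) by (unfold m; apply Rmin_r).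
  assert (Hm : 0 < m).
  { assert (0 < A / (20 * M)) by (apply Rdiv_lt_0_compat; lra).
    unfold m; repeat apply Rmin_pos; lra. }
  set (delta := Rmin (Rmin d0 (A / (4 * M))) (m ^ 2 / 2)).
  assert (Hde1 : delta <= d0) by (unfold delta; eapply Rle_trans; [apply Rmin_l| apply Rmin_l]).
  assert (Hde2 : delta <= A / (4 * M)) by (unfold delta; eapply Rle_trans; [apply Rmin_l| apply Rmin_r]).
  assert (Hde3 : delta <= m ^ 2 / 2) by (unfold delta; apply Rmin_r).
  assert (Hde : 0 < delta).
  { assert (0 < m ^ 2) by (apply pow_lt; lra).
    assert (0 < A / (4 * M)) by (apply Rdiv_lt_0_compat; lra).
    unfold delta; repeat apply Rmin_pos; lra. }
  set (Cc := 40 * M / A).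
  assert (HCc : 0 <= Cc) by (unfold Cc; apply Rmult_le_pos; [lra|left; apply Rinv_0_lt_compat; lra]).
  assert (ROOT : forall (e : R) t, (e = 1 \/ e = -1) -> t0 - delta < t < t0 ->
     exists x, u t x = 0 /\ Rabs (x - xi0 - e * sqrt (2 * (t0 - t))) <= Cc * (t0 - t) /\ Rabs (x - xi0) < eps /\ Rabs (px u t x - a * (e * sqrt (2 * (t0 - t)))) <= 49 * M * (t0 - t)).
  { intros e t He Ht.
    set (w := e * sqrt (2 * (t0 - t))).
    set (v := sqrt (2 * (t0 - t))) in *.
    assert (Hv0 : 0 <= v) by apply sqrt_pos.
    assert (Hv2 : v ^ 2 = 2 * (t0 - t)) by (apply pow2_sqrt; lra).
    assert (Hwv : Rabs w = v).
    { unfold w. rewrite Rabs_mult, (Rabs_pos_eq v) by lra.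
      destruct He as [He|He]; rewrite He; [rewrite Rabs_R1|replace (Rabs (-1)) with 1 by (unfold Rabs; destruct Rcase_abs; lra)]; ring. }
    assert (Hw2 : w ^ 2 = 2 * (t0 - t)) by (rewrite <- pow2_abs, Hwv; exact Hv2).
    assert (Hvm : v < m).
    { assert (v ^ 2 < m ^ 2) by lra. destruct (Rlt_or_le v m) as [|Hn]; auto.
      assert (m ^ 2 <= v ^ 2) by (apply pow_incr; lra). lra. }
    destruct (root_exists u t0 xi0 d0 M a t w Hu Est HM Hzxx ltac:(lra) ltac:(lra) Hw2)
      as [x (Hx1 & Hx2 & Hx3 & Hx4)].
    - rewrite Hwv; lra.
    - rewrite Hwv. rewrite Hv2.
      assert (v <= A / (20 * M)) by lra.
      assert (Hvv : 20 * M / A * (2 * (t0 - t)) = (20 * M / A * v) * v) by (rewrite <- Hv2; field; lra).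
      fold A. rewrite Hvv.
      assert (20 * M / A * v <= 1).
      { apply Rmult_le_reg_r with (A / (20 * M)). apply Rdiv_lt_0_compat; lra.
        replace (20 * M / A * v * (A / (20 * M))) with v by (field; lra). lra. }
      assert (0 <= 20 * M / A * v).
      { apply Rmult_le_pos; [|lra]. unfold Rdiv. apply Rmult_le_pos; [lra|left; apply Rinv_0_lt_compat; lra]. }
      nra.
    - rewrite Hwv; lra.
    - exists x. split; [exact Hx1|]. split; [exact Hx2|]. split; [rewrite Hwv in Hx3; lra|exact Hx4]. }
  destruct (root_fun (fun t x => u t x = 0 /\ Rabs (x - xi0 - 1 * sqrt (2 * (t0 - t))) <= Cc * (t0 - t) /\ Rabs (x - xi0) < eps /\ Rabs (px u t x - a * (1 * sqrt (2 * (t0 - t)))) <= 49 * M * (t0 - t))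
     (fun t => t0 - delta < t < t0) (fun t => ROOT 1 t (or_introl eq_refl))) as [xi1 Hxi1].
  destruct (root_fun (fun t x => u t x = 0 /\ Rabs (x - xi0 - -1 * sqrt (2 * (t0 - t))) <= Cc * (t0 - t) /\ Rabs (x - xi0) < eps /\ Rabs (px u t x - a * (-1 * sqrt (2 * (t0 - t)))) <= 49 * M * (t0 - t))
     (fun t => t0 - delta < t < t0) (fun t => ROOT (-1) t (or_intror eq_refl))) as [xi2 Hxi2].
  exists delta, eps, (Cc + 49 * M), xi1, xi2.
  split; [exact Hde|]. split; [exact Heps|]. split.
  - intros t Ht.
    destruct (Hxi1 t Ht) as (A1 & A2 & A3 & A4).
    destruct (Hxi2 t Ht) as (B1 & B2 & B3 & B4).
    assert (Hs : 0 <= 49 * M * (t0 - t)) by (apply Rmult_le_pos; lra).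
    assert (Hs' : 0 <= Cc * (t0 - t)) by (apply Rmult_le_pos; lra).
    replace ((Cc + 49 * M) * (t0 - t)) with (Cc * (t0 - t) + 49 * M * (t0 - t)) by ring.
    replace (xi1 t - xi0 - sqrt (2 * (t0 - t))) with (xi1 t - xi0 - 1 * sqrt (2 * (t0 - t))) by ring.
    replace (xi2 t - xi0 + sqrt (2 * (t0 - t))) with (xi2 t - xi0 - -1 * sqrt (2 * (t0 - t))) by ring.
    replace (px u t (xi1 t) - sqrt (2 * (t0 - t)) * a) with (px u t (xi1 t) - a * (1 * sqrt (2 * (t0 - t)))) by ring.
    replace (px u t (xi2 t) + sqrt (2 * (t0 - t)) * a) with (px u t (xi2 t) - a * (-1 * sqrt (2 * (t0 - t)))) by ring.
    repeat split; try assumption; lra.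
  - intros t x Ht Hx Hux.
    destruct (Est t x) as [E1 _].
    { rewrite Rabs_pos_eq; lra. }
    { lra. }
    rewrite Hux, (Rabs_pos_eq (t - t0)) in E1 by lra.
    assert (Hs0 : 0 < t - t0) by lra. assert (Hs1 : t - t0 < delta) by lra.
    set (s := t - t0) in *. set (y := Rabs (x - xi0)) in *.
    assert (Hy0 : 0 <= y) by apply Rabs_pos.
    assert (Hyy : (x - xi0) ^ 2 = y ^ 2) by (unfold y; rewrite pow2_abs; reflexivity).
    rewrite Hyy in E1.
    replace (0 - a / 2 * y ^ 2 - a * s) with (- (a * (y ^ 2 / 2 + s))) in E1 by field.
    rewrite Rabs_Ropp, Rabs_mult, (Rabs_pos_eq (y ^ 2 / 2 + s)) in E1
      by (assert (0 <= y ^ 2) by apply pow2_ge_0; lra).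
    fold A in E1.
    assert (My : M * y <= A / 4).
    { replace (A / 4) with (M * (A / (4 * M))) by (field; lra). apply Rmult_le_compat_l; lra. }
    assert (Ms : M * s <= A / 4).
    { replace (A / 4) with (M * (A / (4 * M))) by (field; lra). apply Rmult_le_compat_l; lra. }
    assert (0 <= y ^ 2) by apply pow2_ge_0.
    assert (M * y ^ 2 * y <= A / 4 * y ^ 2) by (replace (M * y ^ 2 * y) with ((M * y) * y ^ 2) by ring; apply Rmult_le_compat_r; lra).
    assert (M * s * s <= A / 4 * s) by (apply Rmult_le_compat_r; lra).
    assert (M * y * s <= A / 4 * s) by (apply Rmult_le_compat_r; lra).
    assert (0 < A * s) by (apply Rmult_lt_0_compat; lra).
    nra.
Qed.
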